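(* Let $p,q\in\mathcal{P}_d(\mathbb{C})$, let $\alpha$ be a root of $p$ of multiplicity $m^p_\alpha$ and $\beta$ a root of $q$ of multiplicity $m^q_\beta$. If $m:=m^p_\alpha+m^q_\beta-d\ge 0$, then $\alpha+\beta$ is a root of $p\boxplus_d q$ of multiplicity exactly $m$ (in particular, if $m=0$ then $\alpha+\beta$ is not a root of $p\boxplus_d q$).
   Context: $\mathcal{P}_d(\mathbb{C})$ denotes the monic complex polynomials of degree $d$. For $p(x)=\prod_{i=1}^d(x-\lambda_i)$ write $p(x)=\sum_{k=0}^d(-1)^k\binom{d}{k}\tilde e_k(p)x^{d-k}$, where $\tilde e_k(p)=\binom{d}{k}^{-1}\sum_{i_1<\dots<i_k}\lambda_{i_1}\cdots\lambda_{i_k}$, $\tilde e_0=1$. The finite free additive convolution $p\boxplus_d q$ is the monic degree-$d$ polynomial with $\tilde e_k(p\boxplus_d q)=\sum_{i=0}^k\binom{k}{i}\tilde e_i(p)\tilde e_{k-i}(q)$ for $0\le k\le d$. *)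

(* Defs.v *)
(* Complex numbers are modelled as R[i] = complex R for an
   arbitrary R : realType (a model of the real numbers), i.e. C = R[i] is C. *)
From HB Require Import structures.
From mathcomp Require Import all_boot all_order all_algebra.
From mathcomp Require Import reals complex.
Set Implicit Arguments. Unset Strict Implicit. Unset Printing Implicit Defensive.
Import Order.TTheory GRing.Theory Num.Theory.
Local Open Scope ring_scope.

(* P_d(F): monic polynomials of degree d (size = degree + 1). *)
Definition monic_deg (F : nzRingType) (d : nat) (p : {poly F}) : Prop :=
  p \is monic /\ size p = d.+1.

(* Normalized coefficient etilde_k(p), defined through the expansion
   p(x) = \sum_k (-1)^k C(d,k) etilde_k(p) x^(d-k), i.e.
   etilde_k(p) = (-1)^k * (coefficient of x^(d-k)) / C(d,k). *)
Definition etilde (F : fieldType) (d : nat) (p : {poly F}) (k : nat) : F :=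
  (-1) ^+ k * p`_(d - k) / ('C(d, k))%:R.

Definition ffconv (F : fieldType) (d : nat) (p q : {poly F}) : {poly F} :=
  \sum_(k < d.+1)
    ((-1) ^+ k * ('C(d, k))%:R *
      (\sum_(i < k.+1) ('C(k, i))%:R * etilde d p i * etilde d q (k - i)))
    *: 'X^(d - k).

(* Main.v *)
Require Import Defs.
From HB Require Import structures.
From mathcomp Require Import all_boot all_order all_algebra.
From mathcomp Require Import reals complex.
From mathcomp Require Import ring lra zify.
Import Order.TTheory GRing.Theory Num.Theory.
Local Open Scope ring_scope.
Lemma binA (d k i : nat) : (i <= k)%N -> (k <= d)%N ->
  ('C(d, k) * 'C(k, i) = 'C(d, i) * 'C(d - i, k - i))%N.
Proof.
move=> ik kd.
have h1 := bin_fact kd. have h2 := bin_fact ik.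
have h3 : (i <= d)%N by apply: leq_trans kd.
have h4 := bin_fact h3.
have h5 : (k - i <= d - i)%N by lia.
have h6 := bin_fact h5.
have e : (d - i - (k - i) = d - k)%N by lia.
rewrite e in h6.
apply/eqP; rewrite -(eqn_pmul2r (fact_gt0 i)) -(eqn_pmul2r (fact_gt0 (k - i))) -(eqn_pmul2r (fact_gt0 (d - k))).
apply/eqP.
transitivity (d`!).
  rewrite -h1 -h2; ring.
rewrite -h4 -h6; ring.
Qed.

Section Gen.
Variable F : numFieldType.
Implicit Types p q r s : {poly F}.

Lemma mup0_coef r n : r`_n != 0 -> (forall j, (j < n)%N -> r`_j = 0) -> mup 0 r = n.
Proof.
move=> rn rj.
pose s := \poly_(i < size r) r`_(i + n).
have -> : r = s * 'X^n.
  apply/polyP => i; rewrite coefMXn coef_poly.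
  case: ltnP => [/rj //|ni].
  case: ltnP => [_|si]; first by rewrite subnK.
  by rewrite nth_default //; apply: leq_trans si _; apply: leq_subr.
have s0 : s`_0 != 0.
  rewrite coef_poly add0n; case: ltnP => // sr.
  by move: rn; rewrite nth_default // (leq_trans sr).
have sn0 : s != 0 by apply: contraNneq s0 => ->; rewrite coef0.
rewrite mupM // ?monic_neq0 ?monicXn //.
rewrite mupNroot ?rootE ?horner_coef0 // add0n.
by rewrite -['X]subr0 -polyC0 mup_XsubCX eqxx.
Qed.

Lemma mup0_fact r : r != 0 -> exists s, r = s * 'X^(mup 0 r) /\ s`_0 != 0.
Proof.
move=> r0.
have : (('X - 0%:P) ^+ (mup 0 r) %| r) by rewrite -mup_geq.
rewrite polyC0 subr0 => /dvdpP [s hs].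
exists s; split => //.
apply/negP => /eqP s0.
have : (mup 0 r <= mup 0 r)%N by [].
rewrite mup_leq // => /negP; apply.
move: hs; set m := mup 0 r => hs.
rewrite polyC0 subr0 {1}hs exprSr mulrC dvdp_mul2r ?monic_neq0 ?monicXn //.
by rewrite -['X]subr0 -polyC0 -root_factor_theorem rootE horner_coef0 s0.
Qed.

Lemma mup_shift_le p x c : p != 0 -> (mup x p <= mup (x - c) (p \Po ('X + c%:P)))%N.
Proof.
move=> p0.
have P0 : p \Po ('X + c%:P) != 0 by rewrite comp_poly_eq0 ?size_XaddC.
rewrite mup_geq //.
have : (('X - x%:P) ^+ (mup x p) %| p) by rewrite -mup_geq.
move/(dvdp_comp_poly ('X + c%:P)).
rewrite rmorphXn /= comp_polyB comp_polyX comp_polyC.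
by have -> : 'X - (x - c)%:P = 'X + c%:P - x%:P by rewrite polyCB; ring.
Qed.

Lemma mup_shift p c : p != 0 -> mup c p = mup 0 (p \Po ('X + c%:P)).
Proof.
move=> p0; apply/eqP; rewrite eqn_leq.
have := mup_shift_le p c c p0; rewrite subrr => -> /=.
have P0 : p \Po ('X + c%:P) != 0 by rewrite comp_poly_eq0 ?size_XaddC.
have := @mup_shift_le _ 0 (- c) P0.
by rewrite opprK add0r polyCN comp_polyXaddC_K.
Qed.


Lemma sign3 (k i : nat) : (i <= k)%N ->
  (-1) ^+ k * (-1) ^+ i * (-1) ^+ (k - i) = 1 :> F.
Proof.
move=> ik; rewrite -mulrA -exprD subnKC // -exprD addnn -muln2 exprM; exact: sqrr_sign.
Qed.

Lemma binF0 (n m : nat) : (m <= n)%N -> ('C(n, m)%:R : F) != 0.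
Proof. by move=> mn; rewrite pnatr_eq0 -lt0n bin_gt0. Qed.

Lemma ffconv_deriv d p q : (size p <= d.+1)%N ->
  ffconv d p q = \sum_(j < d.+1) (q`_(d - j) / ('C(d, j))%:R) *: p^`N(j).
Proof.
move=> sp.
apply/polyP => n; rewrite /ffconv !coef_sum.
under eq_bigr do rewrite coefZ coefXn.
under [RHS]eq_bigr do rewrite coefZ coef_nderivn.
case: (ltnP d n) => [dn | nd].
  rewrite [LHS]big1; last first.
    move=> k _; have [e|_] := eqVneq n (d - k)%N; last by rewrite mulr0n mulr0.
    by move: dn; rewrite e ltnNge leq_subr.
  rewrite [RHS]big1 // => j _.
  rewrite [p`_ _]nth_default ?mul0rn ?mulr0 //; apply: (leq_trans sp); lia.
pose k := (d - n)%N.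
have kd : (k < d.+1)%N by rewrite ltnS leq_subr.
rewrite (bigD1 (Ordinal kd)) //= [X in _ + X]big1 ?addr0; last first.
  move=> j /eqP jk; have [e|_] := eqVneq n (d - j)%N; last by rewrite mulr0n mulr0.
  exfalso; apply: jk; apply: val_inj => /=; rewrite /k e subKn //.
  by rewrite -ltnS.
have -> : n = (d - k)%N by rewrite /k subKn.
rewrite eqxx mulr1.
rewrite (bigID (fun j : 'I_d.+1 => (j < k.+1)%N)) /= [X in _ + X]big1 ?addr0; last first.
  move=> j; rewrite -leqNgt => kj.
  rewrite [p`_ _]nth_default ?mul0rn ?mulr0 //; apply: (leq_trans sp).
  rewrite /k; lia.
rewrite -(big_ord_widen _ (fun j => q`_(d - j) / ('C(d, j))%:R * (p`_(j + (d - k)) *+ 'C(j + (d - k), j)))) //.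
rewrite (reindex_inj rev_ord_inj) /= mulr_sumr.
apply: eq_bigr => i _.
have ik : (i <= k)%N by rewrite -ltnS.
rewrite subSS subKn //.
have e1 : (i + (d - k) = d - (k - i))%N by move: ik kd; rewrite /k; lia.
rewrite e1 /etilde.
have kd' : (k <= d)%N by rewrite -ltnS.
have hb : ('C(d, k)%:R * 'C(k, k - i)%:R : F) = 'C(d, k - i)%:R * 'C(d - (k - i), k - (k - i))%:R.
  by rewrite -!natrM binA // leq_subr.
rewrite subKn // in hb.
have c1 : ('C(d, i)%:R : F) != 0 by apply: binF0; lia.
have c2 : ('C(d, k - i)%:R : F) != 0 by apply: binF0; lia.
rewrite -mulr_natr.
transitivity (((-1) ^+ k * (-1) ^+ (k - i) * (-1) ^+ i) *
   (('C(d, k)%:R * 'C(k, k - i)%:R) * (p`_(d - (k - i)) * q`_(d - i) / ('C(d, k - i)%:R * 'C(d, i)%:R)))).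
  by field; rewrite c1 c2.
have hs : (-1) ^+ k * (-1) ^+ (k - i) * (-1) ^+ i = 1 :> F.
  by rewrite -mulrA (mulrC ((-1) ^+ (k - i))) mulrA sign3.
rewrite hs hb; field; by rewrite c1 c2.
Qed.


Lemma ffconvC d p q : ffconv d p q = ffconv d q p.
Proof.
rewrite /ffconv; apply: eq_bigr => k _; congr (_ *: _); congr (_ * _).
rewrite (reindex_inj rev_ord_inj) /=; apply: eq_bigr => i _.
have ik : (i <= k)%N by rewrite -ltnS.
by rewrite subSS subKn // bin_sub // mulrAC.
Qed.

Lemma derivn_shift p c j : (p \Po ('X + c%:P))^`(j) = p^`(j) \Po ('X + c%:P).
Proof.
elim: j => [|j IH]; first by rewrite !derivn0.
by rewrite !derivnS IH deriv_comp derivD derivX derivC addr0 mulr1.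
Qed.

Lemma nderivn_shift p c j : (p \Po ('X + c%:P))^`N(j) = p^`N(j) \Po ('X + c%:P).
Proof.
have := derivn_shift p c j; rewrite !nderivn_def raddfMn /=.
move=> H; apply/polyP => i; move/(congr1 (fun r => r`_i)): H.
rewrite !coefMn => /eqP; rewrite -subr_eq0 -mulrnBl mulrn_eq0 subr_eq0.
by rewrite eqn0Ngt fact_gt0 /= => /eqP.
Qed.

Lemma ffconv_shift1 d p q c : (size p <= d.+1)%N ->
  ffconv d (p \Po ('X + c%:P)) q = ffconv d p q \Po ('X + c%:P).
Proof.
move=> sp.
rewrite !ffconv_deriv ?size_comp_poly2 ?size_XaddC //.
rewrite raddf_sum; apply: eq_bigr => j _.
by rewrite nderivn_shift /= comp_polyZ.
Qed.

Lemma ffconv_shift d p q a b : (size p <= d.+1)%N -> (size q <= d.+1)%N ->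
  ffconv d (p \Po ('X + a%:P)) (q \Po ('X + b%:P)) = ffconv d p q \Po ('X + (a + b)%:P).
Proof.
move=> sp sq.
rewrite ffconv_shift1 // ffconvC ffconv_shift1 // ffconvC -comp_polyA.
by rewrite comp_polyD comp_polyX comp_polyC polyCD addrA.
Qed.


Lemma coef_key d P Q a b s t :
  P = s * 'X^a -> Q = t * 'X^b -> s`_0 != 0 -> t`_0 != 0 ->
  (size P <= d.+1)%N -> (b <= d)%N -> (d <= a + b)%N ->
  (ffconv d P Q)`_(a + b - d) != 0 /\
  forall n, (n < a + b - d)%N -> (ffconv d P Q)`_n = 0.
Proof.
move=> hP hQ s0 t0 sP bd dab.
have cP i : P`_i = if (i < a)%N then 0 else s`_(i - a) by rewrite hP coefMXn.
have cQ i : Q`_i = if (i < b)%N then 0 else t`_(i - b) by rewrite hQ coefMXn.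
rewrite ffconv_deriv //.
split; last first.
  move=> n hn; rewrite coef_sum big1 // => j _.
  rewrite coefZ coef_nderivn cP cQ.
  case: ifP => h1; first by rewrite ?mul0rn ?mulr0 ?mul0r.
  case: ifP => h2; first by rewrite ?mul0rn ?mulr0 ?mul0r.
  move/negbT: h1; move/negbT: h2; rewrite -!leqNgt => h2 h1.
  exfalso; move: (ltn_ord j); lia.
have jd : (d - b < d.+1)%N by rewrite ltnS leq_subr.
rewrite coef_sum (bigD1 (Ordinal jd)) //= big1 ?addr0; last first.
  move=> j /eqP jne; rewrite coefZ coef_nderivn cP cQ.
  case: ifP => h1; first by rewrite ?mul0rn ?mulr0 ?mul0r.
  case: ifP => h2; first by rewrite ?mul0rn ?mulr0 ?mul0r.
  move/negbT: h1; move/negbT: h2; rewrite -!leqNgt => h2 h1.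
  exfalso; apply: jne; apply: val_inj => /=; move: (ltn_ord j); lia.
rewrite coefZ coef_nderivn cP cQ.
have e1 : (d - b + (a + b - d) = a)%N by lia.
have e2 : (d - (d - b) = b)%N by lia.
rewrite e1 e2 ltnn subnn ltnn subnn.
rewrite !mulf_neq0 // ?invr_eq0 ?binF0 ?leq_subr // mulrn_eq0 negb_or s0 andbT -lt0n bin_gt0; lia.
Qed.

End Gen.

Theorem mainTheorem2 (R : realType) (d : nat) (p q : {poly R[i]})
    (alpha beta : R[i]) :
  monic_deg d p -> monic_deg d q ->
  root p alpha -> root q beta ->
  (d <= mup alpha p + mup beta q)%N ->
  mup (alpha + beta) (ffconv d p q) = (mup alpha p + mup beta q - d)%N.
Proof.
move=> [pm sp] [qm sq] _ _ hd.
have p0 : p != 0 := monic_neq0 pm.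
have q0 : q != 0 := monic_neq0 qm.
rewrite (@mup_shift _ p alpha p0) (@mup_shift _ q beta q0) in hd *.
set P := p \Po ('X + alpha%:P) in hd *.
set Q := q \Po ('X + beta%:P) in hd *.
have sP : size P = d.+1 by rewrite size_comp_poly2 ?size_XaddC.
have sQ : size Q = d.+1 by rewrite size_comp_poly2 ?size_XaddC.
have P0 : P != 0 by rewrite -size_poly_gt0 sP.
have Q0 : Q != 0 by rewrite -size_poly_gt0 sQ.
have [s [hs s0]] := @mup0_fact _ P P0.
have [t [ht t0]] := @mup0_fact _ Q Q0.
move: hs ht hd; set a := mup 0 P; set b := mup 0 Q => hs ht hd.
have bd : (b <= d)%N.
  rewrite leqNgt; apply/negP => db.
  have : Q`_d = 1.
    have -> : Q`_d = lead_coef Q by rewrite /lead_coef sQ.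
    rewrite /Q lead_coef_comp ?size_XaddC // lead_coefXaddC expr1n mulr1.
    exact/monicP.
  by rewrite ht coefMXn db => /eqP; rewrite eq_sym oner_eq0.
have [nz zs] := @coef_key _ d P Q a b s t hs ht s0 t0 (eq_leq sP) bd hd.
have main := @ffconv_shift _ d p q alpha beta (eq_leq sp) (eq_leq sq).
rewrite -/P -/Q in main.
have F0 : ffconv d p q != 0.
  by apply: contraNneq nz => e; rewrite main e comp_poly0 coef0.
rewrite (@mup_shift _ _ (alpha + beta) F0) -main.
by apply: mup0_coef.
Qed.
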